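(* Work in the real projective plane. Let $ABC$ be a triangle and let $\psi$ denote isogonal conjugation with respect to $ABC$. Let $l_1, l_2$ be two lines, and let $\mathcal{C}_1 = \psi(l_1)$, $\mathcal{C}_2 = \psi(l_2)$ be the circumconics of $ABC$ obtained as their images. Let $X, Y$ be two points on $l_1$ and put $X' = \psi(X)$, $Y' = \psi(Y)$. If $X$ and $Y$ are conjugate with respect to $\mathcal{C}_2$, then the line $X'Y'$ passes through the pole of $l_2$ with respect to $\mathcal{C}_1$.
   Context: Under isogonal conjugation with respect to a triangle, a line is transformed into a conic through the three vertices (a circumconic) and vice versa. Two points $U, V$ are conjugate with respect to a conic $\mathcal{C}$ if the polar of $U$ with respect to $\mathcal{C}$ passes through $V$ (equivalently, the polar of $V$ passes through $U$). *)

(* Defs.v *)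
From HB Require Import structures.
From mathcomp Require Import all_boot all_order all_algebra.
Set Implicit Arguments. Unset Strict Implicit. Unset Printing Implicit Defensive.
Import Order.TTheory GRing.Theory Num.Theory.
Local Open Scope ring_scope.

(* Model: the real projective plane P^2(R) as the projective completion of the
   Euclidean plane R^2.  Points are nonzero column vectors 'cV[R]_3 (homogeneous
   coordinates, up to nonzero scaling), lines are nonzero row vectors 'rV[R]_3;
   the affine point (x,y) has homogeneous coordinates (x:y:1). *)

Section Defs.
Variable R : realFieldType.

Definition hom (P : R * R) : 'cV[R]_3 :=
  \col_(i < 3) nth 0 [:: P.1; P.2; 1] i.

Definition sqdist (P Q : R * R) : R := (P.1 - Q.1) ^+ 2 + (P.2 - Q.2) ^+ 2.

Definition tri_mx (A B C : R * R) : 'M[R]_3 :=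
  \matrix_(i < 3, j < 3) (nth (hom A) [:: hom A; hom B; hom C] j) i 0.

Definition is_triangle (A B C : R * R) : Prop := \det (tri_mx A B C) != 0.

Definition on_line (X : 'cV[R]_3) (l : 'rV[R]_3) : Prop := (l *m X) 0 0 = 0.

(* homogeneous barycentric coordinates (u:v:w) of X w.r.t. ABC:
   X = u A + v B + w C *)
Definition bary (A B C : R * R) (X : 'cV[R]_3) : 'cV[R]_3 :=
  invmx (tri_mx A B C) *m X.

(* Isogonal conjugation psi w.r.t. ABC, in its standard barycentric form
   (u:v:w) |-> (a^2 v w : b^2 w u : c^2 u v), a = BC, b = CA, c = AB.
   [isog A B C X] is a homogeneous representative of psi(X); psi(X) is
   defined exactly when this vector is nonzero. *)
Definition isog (A B C : R * R) (X : 'cV[R]_3) : 'cV[R]_3 :=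
  let u := bary A B C X 0 0 in
  let v := bary A B C X 1 0 in
  let w := bary A B C X 2%:R 0 in
  tri_mx A B C *m
    \col_(i < 3) nth 0 [:: sqdist B C * v * w;
                           sqdist C A * w * u;
                           sqdist A B * u * v] i.

(* A conic is given by a quadratic form on homogeneous coordinates. *)
Definition qform := 'cV[R]_3 -> R.

(* The circumconic psi(l): the locus of points X with psi(X) on l, i.e. the
   zero set of the quadratic form X |-> l . isog X. *)
Definition circumconic (A B C : R * R) (l : 'rV[R]_3) : qform :=
  fun X => (l *m isog A B C X) 0 0.

(* (twice) the symmetric bilinear form associated with the conic;
   the polar of U is the line {V | polar_form q U V = 0}. *)
Definition polar_form (q : qform) (U V : 'cV[R]_3) : R :=
  q (U + V) - q U - q V.

Definition conic_conjugate (q : qform) (U V : 'cV[R]_3) : Prop := polar_form q U V = 0.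

Definition conic_nondeg (q : qform) : Prop :=
  forall U, (forall V, polar_form q U V = 0) -> U = 0.

Definition is_pole_wrt (q : qform) (l : 'rV[R]_3) (P : 'cV[R]_3) : Prop :=
  P != 0 /\ exists k : R, k != 0 /\ forall V, polar_form q P V = k * (l *m V) 0 0.

Definition pcollinear3 (U V W : 'cV[R]_3) : Prop :=
  \det (\matrix_(i < 3, j < 3) (nth U [:: U; V; W] j) i 0) = 0.

End Defs.

(* Main.v *)
Require Import Defs.
From HB Require Import structures.
From mathcomp Require Import all_boot all_order all_algebra ring.
Import Order.TTheory GRing.Theory Num.Theory.
Local Open Scope ring_scope.
Lemma det3 (R : comRingType) (M : 'M[R]_3) : \det M =
  M 0 0 * (M 1 1 * M 2 2 - M 1 2 * M 2 1)
  - M 0 1 * (M 1 0 * M 2 2 - M 1 2 * M 2 0)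
  + M 0 2 * (M 1 0 * M 2 1 - M 1 1 * M 2 0).
Proof.
rewrite (expand_det_row M 0) !big_ord_recl big_ord0 /cofactor.
rewrite !(expand_det_row _ 0) !big_ord_recl !big_ord0 /cofactor.
rewrite !det_mx11 !mxE /=.
pose f (i j : nat) := M (inord i) (inord j).
have E : forall i j, M i j = f i j by move=> i j; rewrite /f !inord_val.
have B : forall h i, bump h i = if (h <= i)%N then i.+1 else i by move=> h i; rewrite /bump; case: (h <= i)%N.
rewrite !E /f /= !B /= (_ : 1 %% 3 = 1)%N // (_ : (1+1) %% 3 = 2)%N // !expr0 !expr1 /=.

ring.
Qed.

Lemma rv0 (R : ringType) (r : 'rV[R]_3) : r 0 0 = 0 -> r 0 1 = 0 -> r 0 2 = 0 -> r = 0.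
Proof.
move=> h0 h1 h2; apply/rowP => j; rewrite mxE.
case: j => [[|[|[|//]]] Hj]; [rewrite -h0|rewrite -h1|rewrite -h2]; congr (r 0 _); by apply/val_inj.
Qed.

Lemma rv3 (R : comRingType) (l : 'rV[R]_3) (v : 'cV[R]_3) :
  (l *m v) 0 0 = l 0 0 * v 0 0 + l 0 1 * v 1 0 + l 0 2 * v 2 0.
Proof.
rewrite mxE !big_ord_recl big_ord0 addr0 addrA.
have -> : (lift ord0 (lift ord0 ord0) : 'I_3) = 2 by apply/val_inj.
have -> : (lift ord0 ord0 : 'I_3) = 1 by apply/val_inj.
done.
Qed.

Lemma colmul (R : comRingType) (T : 'M[R]_3) (u v w : 'cV[R]_3) :
  \matrix_(i < 3, j < 3) (nth (T *m u) [:: T *m u; T *m v; T *m w] j) i 0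
  = T *m \matrix_(i < 3, j < 3) (nth u [:: u; v; w] j) i 0.
Proof.
apply/matrixP => i j; rewrite !mxE.
case: j => [[|[|[|//]]] Hj] /=; rewrite mxE; apply: eq_bigr => k _; by rewrite !mxE.
Qed.

Definition Fv {R : realFieldType} (A B C : R * R) (z : 'cV[R]_3) : 'cV[R]_3 :=
  \col_(i < 3) nth 0 [:: sqdist B C * z 1 0 * z 2%:R 0;
                         sqdist C A * z 2%:R 0 * z 0 0;
                         sqdist A B * z 0 0 * z 1 0] i.

Lemma key (R : numFieldType) (a b c x0 x1 x2 y0 y1 y2 p0 p1 p2 m0 m1 m2 n0 n1 n2 k : R) :
 [|| m0 != 0, m1 != 0 | m2 != 0] ->
 m0* x0 + m1* x1 + m2* x2 = 0 -> m0* y0+m1* y1+m2* y2 = 0 ->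
  n0 * (a * (x1 + y1) * (x2 + y2)) +
  n1 * (b * (x2 + y2) * (x0 + y0)) +
  n2 * (c * (x0 + y0) * (x1 + y1)) -
  (n0 * (a * x1 * x2) +
   n1 * (b * x2 * x0) +
   n2 * (c * x0 * x1)) -
  (n0 * (a * y1 * y2) +
   n1 * (b * y2 * y0) +
   n2 * (c * y0 * y1)) =
  0 ->
  m0 *
  (a *
   (p1 + b * (x2 * y0 + x0 * y2)) *
   (p2 + c * (x0 * y1 + x1 * y0))) +
  m1 *
  (b *
   (p2 + c * (x0 * y1 + x1 * y0)) *
   (p0 + a * (x1 * y2 + x2 * y1))) +
  m2 *
  (c *
   (p0 + a * (x1 * y2 + x2 * y1)) *
   (p1 + b * (x2 * y0 + x0 * y2))) -
  (m0 * (a * p1 * p2) +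
   m1 * (b * p2 * p0) +
   m2 * (c * p0 * p1)) -
  (m0 *
   (a * (b * (x2 * y0 + x0 * y2)) *
    (c * (x0 * y1 + x1 * y0))) +
   m1 *
   (b * (c * (x0 * y1 + x1 * y0)) *
    (a * (x1 * y2 + x2 * y1))) +
   m2 *
   (c * (a * (x1 * y2 + x2 * y1)) *
    (b * (x2 * y0 + x0 * y2)))) =
  k *
  (n0 * (a * (x1 * y2 + x2 * y1)) +
   n1 * (b * (x2 * y0 + x0 * y2)) +
   n2 * (c * (x0 * y1 + x1 * y0))) ->
  a * x1 * x2 *
  (b * y2 * y0 * p2 -
   p1 * (c * y0 * y1)) -
  a * y1 * y2 *
  (b * x2 * x0 * p2 -
   p1 * (c * x0 * x1)) +
  p0 *
  (b * x2 * x0 * (c * y0 * y1) -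
   b * y2 * y0 * (c * x0 * x1)) =
  0.
Proof.
move=> hm hx hy hc hp.
have hG : n0* (a* (x1* y2+x2* y1)) + n1* (b* (x2* y0+x0* y2)) + n2* (c* (x0* y1+x1* y0)) = 0.
  by apply: etrans hc; ring.
rewrite hG mulr0 in hp.
set Sm := b* c* m0* x0* y0* p0 + c* a* m1* x1* y1* p1 + a* b* m2* x2* y2* p2.
have hS : Sm = 0.
  have h2 : -2 * Sm + (m0* x0 + m1* x1 + m2* x2) * (b* c* y0* p0 + c* a* y1* p1 + a* b* y2* p2)
     + (m0* y0+m1* y1+m2* y2) * (b* c* x0* p0 + c* a* x1* p1 + a* b* x2* p2) = 0.
    by apply: etrans hp; rewrite /Sm; ring.
  rewrite hx hy !mul0r !addr0 in h2.
  move/eqP: h2; rewrite mulf_eq0 => /orP [|/eqP //].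
  by rewrite oppr_eq0 pnatr_eq0.
pose c0 := b * c * x0 * y0 * p0. pose c1 := c * a * x1 * y1 * p1. pose c2 := a * b * x2 * y2 * p2.
case/or3P: hm => hmi; apply: (mulfI hmi); rewrite mulr0.
- transitivity (- ((x1 * y2 - x2 * y1) * Sm + c1 * (x2 * (m0 * y0 + m1 * y1 + m2 * y2) - y2 * (m0 * x0 + m1 * x1 + m2 * x2))
     - c2 * (x1 * (m0 * y0 + m1 * y1 + m2 * y2) - y1 * (m0 * x0 + m1 * x1 + m2 * x2)))).
    rewrite /Sm /c1 /c2; ring.
  by rewrite hS hx hy; ring.
- transitivity (- ((x2 * y0 - x0 * y2) * Sm + c2 * (x0 * (m0 * y0 + m1 * y1 + m2 * y2) - y0 * (m0 * x0 + m1 * x1 + m2 * x2))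
     - c0 * (x2 * (m0 * y0 + m1 * y1 + m2 * y2) - y2 * (m0 * x0 + m1 * x1 + m2 * x2)))).
    rewrite /Sm /c0 /c2; ring.
  by rewrite hS hx hy; ring.
- transitivity (- ((x0 * y1 - x1 * y0) * Sm + c0 * (x1 * (m0 * y0 + m1 * y1 + m2 * y2) - y1 * (m0 * x0 + m1 * x1 + m2 * x2))
     - c1 * (x0 * (m0 * y0 + m1 * y1 + m2 * y2) - y0 * (m0 * x0 + m1 * x1 + m2 * x2)))).
    rewrite /Sm /c0 /c1; ring.
  by rewrite hS hx hy; ring.
Qed.

Theorem proposition3p3 (R : realFieldType) (A B C : R * R)
    (l1 l2 : 'rV[R]_3) (X Y P : 'cV[R]_3) :
  is_triangle A B C ->
  l1 != 0 -> l2 != 0 ->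
  conic_nondeg (circumconic A B C l1) ->
  X != 0 -> Y != 0 ->
  on_line X l1 -> on_line Y l1 ->
  isog A B C X != 0 -> isog A B C Y != 0 ->
  conic_conjugate (circumconic A B C l2) X Y ->
  is_pole_wrt (circumconic A B C l1) l2 P ->
  pcollinear3 (isog A B C X) (isog A B C Y) P.
Proof.
move=> hT hl1 hl2 _ _ _ onX onY _ _ hconj [_ [k [_ hpole]]].
have uT : tri_mx A B C \in unitmx by rewrite unitmxE unitfE.
set T := tri_mx A B C in uT *.
have bK : forall Z, T *m bary A B C Z = Z by move=> Z; rewrite /bary mulmxA mulmxV // mul1mx.
have Kb : forall z, bary A B C (T *m z) = z by move=> z; rewrite /bary mulmxA mulVmx // mul1mx.
have bD : forall Z W, bary A B C (Z + W) = bary A B C Z + bary A B C W by move=> Z W; rewrite /bary mulmxDr.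
have isogE : forall Z, isog A B C Z = T *m Fv A B C (bary A B C Z) by [].
have ccE : forall l Z, circumconic A B C l Z = ((l *m T) *m Fv A B C (bary A B C Z)) 0 0.
  by move=> l Z; rewrite /circumconic isogE mulmxA.
have hm : l1 *m T != 0.
  by apply: contraNneq hl1 => h; rewrite -(mulmxK uT l1) h mul0mx.
move: onX onY hconj hpole; rewrite /on_line /conic_conjugate /polar_form.
rewrite -{1}(bK X) -{1}(bK Y) -(bK P) !(mulmxA l1) !ccE !bD.
rewrite /pcollinear3 !isogE colmul det_mulmx.
move: hm.
set m := l1 *m T; set n := l2 *m T.
set x := bary A B C X; set y := bary A B C Y; set p := bary A B C P.
move=> hm hx hy hc hpole.
pose g : 'cV[R]_3 := \col_(i < 3) nth 0 [:: sqdist B C * (x 1 0 * y 2%:R 0 + x 2%:R 0 * y 1 0);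
   sqdist C A * (x 2%:R 0 * y 0 0 + x 0 0 * y 2%:R 0); sqdist A B * (x 0 0 * y 1 0 + x 1 0 * y 0 0)] i.
move: (hpole (T *m g)); rewrite !ccE -mulmxDr !Kb !(mulmxA l2) -/n -/m => {}hpole.
apply/eqP; rewrite mulf_eq0; apply/orP; right; apply/eqP.
have hm' : [|| m 0 0 != 0, m 0 1 != 0 | m 0 2 != 0].
  apply: contraNT hm; rewrite !negb_or !negbK => /and3P [/eqP h0 /eqP h1 /eqP h2].
  by apply/eqP/rv0.
clearbody m n x y p.
move: hx hy hc hpole; rewrite det3 !rv3 !mxE /=.
exact: key hm'.
Qed.
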